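(* Let $a>0$ and $k\in\mathbb{N}^*$. For all $m\in\{0,\dots,k-1\}$ and $\ell\in\{0,\dots,k-1\}$, $$\frac{1}{n^m}\frac{d^m}{dx^m}\Big(F_{n,\ell}(a;x)-F_{n,\ell+1}(a;x)\Big)\Big|_{x=a}\xrightarrow[n\to\infty]{}(-1)^\ell\binom m\ell,$$ with $\binom m\ell=0$ when $\ell>m$.
   Context: $f(y)=e^{-y}\mathbb 1_{y\ge0}$, $F(y)=(1-e^{-y})\mathbb 1_{y\ge0}$, $f(y;x)=\frac{f(y)}{1-F(x)}\mathbb 1_{y\ge x}$, $F(y;x)=\frac{F(y)-F(x)}{1-F(x)}\mathbb 1_{y\ge x}$, $f_{n,\ell}(y;x)=\ell\binom n\ell F(y;x)^{\ell-1}f(y;x)(1-F(y;x))^{n-\ell}$ (density of the $\ell$-th order statistic of $n$ i.i.d. variables with law $\mathcal{E}(1)$ conditioned on exceeding $x$), $F_{n,\ell}(y;x)=\int_x^y f_{n,\ell}(z;x)dz$ for $\ell\ge1$, and $F_{n,0}(y;x)=\mathbb 1_{y\ge x}$. Derivatives in $x$ at $x=a$ are left derivatives. *)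

(* Defs.v *)
From Stdlib Require Import Reals Lra Lia ClassicalEpsilon.
Open Scope R_scope.

Definition binom (n k : nat) : R := if Nat.leb k n then C n k else 0.

(* Riemann integral int_a^b g (Stdlib RiemannInt, oriented); value 0 if not integrable.
   Defined by choice, since the value of RiemannInt does not depend on the proof. *)
Definition RInt (g : R -> R) (a b : R) : R :=
  epsilon (inhabits 0)
    (fun v => exists pr : Riemann_integrable g a b, RiemannInt pr = v).

Definition fE (y : R) : R := if Rle_dec 0 y then exp (- y) else 0.
Definition FE (y : R) : R := if Rle_dec 0 y then 1 - exp (- y) else 0.

(* conditioned on exceeding x : f(y;x), F(y;x) *)
Definition fc (y x : R) : R := if Rle_dec x y then fE y / (1 - FE x) else 0.
Definition Fc (y x : R) : R := if Rle_dec x y then (FE y - FE x) / (1 - FE x) else 0.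

(* density of the l-th order statistic: f_{n,l}(y;x) *)
Definition fnl (n l : nat) (y x : R) : R :=
  INR l * binom n l * (Fc y x) ^ (l - 1) * fc y x * (1 - Fc y x) ^ (n - l).

Definition Fnl (n l : nat) (y x : R) : R :=
  match l with
  | O => if Rle_dec x y then 1 else 0
  | S _ => RInt (fun z => fnl n l z x) x y
  end.

Definition left_deriv_lim (g : R -> R) (x d : R) : Prop :=
  forall eps : R, 0 < eps -> exists delta : R, 0 < delta /\
    forall h : R, - delta < h < 0 -> Rabs ((g (x + h) - g x) / h - d) < eps.

Definition left_nth_deriv (m : nat) (g : R -> R) (a v : R) : Prop :=
  exists delta : R, 0 < delta /\ exists D : nat -> R -> R,
    (forall y, a - delta < y <= a -> D O y = g y) /\
    (forall i, (i < m)%nat ->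
       (forall y, a - delta < y < a -> derivable_pt_lim (D i) y (D (S i) y)) /\
       left_deriv_lim (D i) a (D (S i) a)) /\
    D m a = v.

(* Main.v *)
Require Import Defs.
From Stdlib Require Import Reals Lra Lia ClassicalEpsilon.
From Coquelicot Require Import Coquelicot.
Open Scope R_scope.

Definition LL (f : R -> R) (d : nat) (c : R) : Prop :=
  is_lim (fun x => f x / x ^ d) p_infty c.

Lemma LL_ext f g d c : (forall x, 0 < x -> f x = g x) -> LL f d c -> LL g d c.
Proof.
  intros H Hf. unfold LL. apply is_lim_ext_loc with (2 := Hf).
  exists 0. intros x Hx. rewrite H; auto.
Qed.

Lemma LL_pow d : LL (fun x => x ^ d) d 1.
Proof.
  unfold LL. apply is_lim_ext_loc with (f := fun _ => 1).
  exists 0. intros x Hx. field. apply pow_nonzero; lra.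
  apply is_lim_const.
Qed.

Lemma LL_zero d : LL (fun _ => 0) d 0.
Proof.
  unfold LL. apply is_lim_ext_loc with (f := fun _ => 0).
  exists 0. intros x Hx. field. apply pow_nonzero; lra.
  apply is_lim_const.
Qed.

Lemma LL_mulx f d c : LL f d c -> LL (fun x => x * f x) (S d) c.
Proof.
  unfold LL. intros H. apply is_lim_ext_loc with (2 := H).
  exists 0. intros x Hx. simpl. field. split. apply pow_nonzero; lra. lra.
Qed.

Lemma LL_plus f g d c1 c2 : LL f d c1 -> LL g d c2 -> LL (fun x => f x + g x) d (c1 + c2).
Proof.
  unfold LL. intros H1 H2.
  apply is_lim_ext_loc with (f := fun x => f x / x ^ d + g x / x ^ d).
  exists 0. intros x Hx. field. apply pow_nonzero; lra.
  eapply is_lim_plus; eauto. simpl. reflexivity.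
Qed.

Lemma LL_scal k f d c : LL f d c -> LL (fun x => k * f x) d (k * c).
Proof.
  unfold LL. intros H1.
  apply is_lim_ext_loc with (f := fun x => k * (f x / x ^ d)).
  exists 0. intros x Hx. field. apply pow_nonzero; lra.
  apply (is_lim_scal_l _ k p_infty c H1).
Qed.

Lemma LL_mul f g d1 d2 c1 c2 : LL f d1 c1 -> LL g d2 c2 ->
  LL (fun x => f x * g x) (d1 + d2) (c1 * c2).
Proof.
  unfold LL. intros H1 H2.
  apply is_lim_ext_loc with (f := fun x => (f x / x ^ d1) * (g x / x ^ d2)).
  exists 0. intros x Hx. rewrite pow_add. field. split; apply pow_nonzero; lra.
  apply (is_lim_mult _ _ p_infty c1 c2 H1 H2). simpl. auto.
Qed.

Lemma lim_ratio_pow s d : is_lim (fun x => ((x + s) / x) ^ d) p_infty 1.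
Proof.
  induction d.
  - simpl. apply is_lim_const.
  - assert (H : is_lim (fun x => (x + s) / x) p_infty 1).
    { apply is_lim_ext_loc with (f := fun x => 1 + s * / x).
      exists 0. intros x Hx. field. lra.
      eapply is_lim_plus. apply is_lim_const.
      apply is_lim_scal_l. apply (is_lim_inv (fun y => y) p_infty p_infty).
      apply is_lim_id. discriminate.
      unfold is_Rbar_plus; simpl. f_equal. f_equal. ring. }
    simpl. replace (Finite 1) with (Rbar_mult 1 1).
    apply is_lim_mult; auto. simpl. auto. simpl. f_equal; ring.
Qed.

Lemma LL_shift s f d c : LL f d c -> LL (fun x => f (x + s)) d c.
Proof.
  unfold LL. intros H.
  apply is_lim_ext_loc with (f := fun x => (f (x + s) / (x + s) ^ d) * (((x + s) / x) ^ d)).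
  exists (Rabs s). intros x Hx.
  assert (0 < x) by (pose proof (Rabs_pos s); lra).
  assert (0 < x + s) by (pose proof (Rle_abs (- s)); rewrite Rabs_Ropp in *; lra).
  unfold Rdiv. rewrite Rpow_mult_distr. rewrite pow_inv. field. split; apply pow_nonzero; lra.
  replace (Finite c) with (Rbar_mult c 1).
  apply is_lim_mult. 
  apply (is_lim_comp (fun y => f y / y ^ d) (fun x => x + s) p_infty c p_infty H).
  replace p_infty with (Rbar_plus p_infty s) at 2 by reflexivity.
  eapply is_lim_plus. apply is_lim_id. apply is_lim_const. simpl. reflexivity.
  exists 0. intros; discriminate.
  apply lim_ratio_pow. simpl; auto. simpl. f_equal; ring.
Qed.

Fixpoint Sd (l r : nat) (x : R) : R :=
  match l with O => x ^ r | S l' => Sd l' r x - Sd l' r (x + 1) end.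

Lemma Sd_rec l r x : Sd (S l) (S r) x = x * Sd (S l) r x - INR (S l) * Sd l r (x + 1).
Proof.
  revert x. induction l; intros x.
  - simpl. ring.
  - change (Sd (S (S l)) (S r) x) with (Sd (S l) (S r) x - Sd (S l) (S r) (x + 1)).
    rewrite !IHl. change (Sd (S (S l)) r x) with (Sd (S l) r x - Sd (S l) r (x + 1)).
    change (Sd (S l) r (x+1)) with (Sd l r (x+1) - Sd l r (x + 1 + 1)).
    rewrite !S_INR. ring.
Qed.

Lemma Sd_S0 l x : Sd (S l) 0 x = 0.
Proof.
  revert x. induction l; intros x; simpl in *.
  - ring.
  - rewrite !IHl. ring.
Qed.

Lemma Sd_zero r : forall l x, (r < l)%nat -> Sd l r x = 0.
Proof.
  induction r; intros l x Hl.
  - destruct l. lia. apply Sd_S0.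
  - destruct l. lia. rewrite Sd_rec. rewrite !IHr by lia. ring.
Qed.

Lemma C_nn n : Binomial.C n n = 1.
Proof. unfold Binomial.C. rewrite Nat.sub_diag. simpl. field. apply INR_fact_neq_0. Qed.

Lemma Sd_lim r : forall l, (l <= r)%nat ->
  LL (Sd l r) (r - l) ((-1) ^ l * Binomial.C r l * INR (Factorial.fact l)).
Proof.
  induction r; intros l Hl.
  - assert (l = 0%nat) by lia. subst. simpl.
    rewrite C_n_0. replace (1 * 1 * 1) with 1 by ring. apply (LL_pow 0).
  - destruct l as [|l'].
    + simpl. rewrite C_n_0. replace (1 * 1 * 1) with 1 by ring. apply (LL_pow (S r)).
    + apply LL_ext with (f := fun x => x * Sd (S l') r x + (- INR (S l')) * Sd l' r (x + 1)).
      { intros x _. rewrite Sd_rec. ring. }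
      replace (S r - S l')%nat with (r - l')%nat by lia.
      destruct (Nat.eq_dec l' r) as [E|E].
      * subst l'. rewrite Nat.sub_diag.
        replace ((-1) ^ S r * Binomial.C (S r) (S r) * INR (Factorial.fact (S r)))
          with (0 + (- INR (S r)) * ((-1) ^ r * Binomial.C r r * INR (Factorial.fact r))).
        apply LL_plus.
        apply LL_ext with (f := fun _ => 0). intros x _. rewrite Sd_zero by lia. ring.
        apply LL_zero.
        apply LL_scal. apply (LL_shift 1 (Sd r r)).
        replace 0%nat with (r - r)%nat by lia. apply IHr. lia.
        rewrite !C_nn. rewrite fact_simpl, mult_INR. simpl pow. ring.
      * replace ((-1) ^ S l' * Binomial.C (S r) (S l') * INR (Factorial.fact (S l')))
          with ((-1) ^ S l' * Binomial.C r (S l') * INR (Factorial.fact (S l'))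
             + (- INR (S l')) * ((-1) ^ l' * Binomial.C r l' * INR (Factorial.fact l'))).
        apply LL_plus.
        replace (r - l')%nat with (S (r - S l')) by lia.
        apply LL_mulx. apply IHr. lia.
        apply LL_scal. apply LL_shift. apply IHr. lia.
        rewrite <- pascal by lia. rewrite fact_simpl, mult_INR. simpl pow. ring.
Qed.

Fixpoint ff (x : R) (l : nat) : R :=
  match l with O => 1 | S l' => ff x l' * (x - INR l') end.

Lemma binom_S n l : INR (S l) * binom n (S l) = INR (n - l) * binom n l.
Proof.
  unfold binom. destruct (Nat.leb_spec (S l) n); destruct (Nat.leb_spec l n); try lia.
  - rewrite pascal_step3 by lia. field. apply not_0_INR; lia.
  - replace (n - l)%nat with 0%nat by lia. simpl. ring.
  - ring.
Qed.

Lemma binom_ff n l : binom n l * INR (Factorial.fact l) = ff (INR n) l.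
Proof.
  induction l.
  - unfold binom. simpl. rewrite C_n_0. ring.
  - simpl ff. rewrite <- IHl. rewrite fact_simpl, mult_INR.
    replace (binom n (S l) * (INR (S l) * INR (Factorial.fact l)))
      with (INR (S l) * binom n (S l) * INR (Factorial.fact l)) by ring.
    rewrite binom_S. destruct (Nat.le_gt_cases l n).
    + rewrite minus_INR by lia. ring.
    + unfold binom. destruct (Nat.leb_spec l n); try lia. ring.
Qed.

Lemma ff_lim l : LL (fun x => ff x l) l 1.
Proof.
  induction l.
  - simpl. apply (LL_pow 0).
  - simpl ff. replace (S l) with (l + 1)%nat by lia. replace 1 with (1 * 1) by ring.
    apply LL_mul. auto.
    apply LL_ext with (f := fun x => (x + - INR l) ^ 1). intros; ring.
    apply (LL_shift (- INR l) (fun x => x ^ 1)). apply LL_pow.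
Qed.

Lemma final_lim m l :
  Un_cv (fun n => binom n l * Sd l m (INR (n - l)) / INR n ^ m) ((-1) ^ l * binom m l).
Proof.
  destruct (Nat.le_gt_cases l m) as [Hlm|Hlm].
  - set (G := fun x => (/ INR (Factorial.fact l)) * (ff x l * Sd l m (x + - INR l))).
    assert (HG : LL G m ((/ INR (Factorial.fact l)) * (1 * ((-1) ^ l * Binomial.C m l * INR (Factorial.fact l))))).
    { apply LL_scal. replace m with (l + (m - l))%nat at 1 by lia. apply LL_mul.
      apply ff_lim. apply (LL_shift (- INR l) (Sd l m)). apply Sd_lim. auto. }
    apply is_lim_seq_Reals.
    replace ((-1) ^ l * binom m l) with ((/ INR (Factorial.fact l)) * (1 * ((-1) ^ l * Binomial.C m l * INR (Factorial.fact l)))).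
    apply is_lim_seq_ext with (u := fun n => (fun x => G x / x ^ m) (INR n)).
    { intros n. unfold G. rewrite <- binom_ff.
      destruct (Nat.le_gt_cases l n).
      - rewrite minus_INR by lia. unfold Rdiv, Rminus. f_equal. field. apply INR_fact_neq_0.
      - unfold binom. destruct (Nat.leb_spec l n); try lia.
        unfold Rdiv. ring_simplify. reflexivity. }
    apply (is_lim_comp_seq (fun x => G x / x ^ m) INR p_infty _ HG). exists 0%nat. intros; discriminate.
    apply is_lim_seq_INR.
    unfold binom. destruct (Nat.leb_spec l m); try lia. field. apply INR_fact_neq_0.
  - apply is_lim_seq_Reals.
    apply is_lim_seq_ext with (u := fun _ => 0).
    intros n. rewrite Sd_zero by lia. unfold Rdiv. ring.
    unfold binom. destruct (Nat.leb_spec l m); try lia. rewrite Rmult_0_r.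
    apply is_lim_seq_const.
Qed.

Fixpoint Di (i l : nat) (N s : R) : R :=
  match l with O => N ^ i * exp (N * s) | S l' => Di i l' N s - Di i l' (N + 1) s end.

Lemma Di_deriv i l : forall N s, is_derive (fun s => Di i l N s) s (Di (S i) l N s).
Proof.
  induction l; intros N s; simpl.
  - auto_derive. auto. simpl. ring.
  - apply (is_derive_minus (fun s => Di i l N s) (fun s => Di i l (N+1) s)); auto.
Qed.

Lemma Di0 i l : forall N, Di i l N 0 = Sd l i N.
Proof.
  induction l; intros N; simpl.
  - rewrite Rmult_0_r, exp_0. ring.
  - rewrite !IHl. reflexivity.
Qed.

Lemma Di_closed l : forall N s, Di 0 l N s = (1 - exp s) ^ l * exp (N * s).
Proof.
  induction l; intros N s; simpl.
  - ring.
  - rewrite !IHl. replace ((N + 1) * s) with (N * s + s) by ring. rewrite exp_plus. ring.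
Qed.



Lemma D_deriv (c N a : R) i l y :
  derivable_pt_lim (fun x => c * Di i l N (x - a)) y (c * Di (S i) l N (y - a)).
Proof.
  apply is_derive_Reals.
  apply (is_derive_scal (fun x => Di i l N (x - a))).
  replace (Di (S i) l N (y - a)) with (1 * Di (S i) l N (y - a)) by ring.
  apply (is_derive_comp (fun s => Di i l N s) (fun x => x - a)).
  apply Di_deriv. auto_derive; auto. 
Qed.

Lemma left_of_deriv f x d : derivable_pt_lim f x d -> left_deriv_lim f x d.
Proof.
  intros H eps Heps. destruct (H eps Heps) as [del Hd].
  exists del. split. apply cond_pos. intros h Hh.
  apply Hd. lra. rewrite Rabs_left by lra. lra.
Qed.

Definition phi (n k : nat) (x z : R) : R :=
  INR k * binom n k * (1 - exp (x - z)) ^ (k - 1) * exp (x - z) * (1 - (1 - exp (x - z))) ^ (n - k).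
Definition BB (n l : nat) (x z : R) : R :=
  binom n l * (1 - exp (x - z)) ^ l * (1 - (1 - exp (x - z))) ^ (n - l).



Lemma BB_deriv n l x z : is_derive (BB n l x) z (phi n l x z - phi n (S l) x z).
Proof.
  unfold BB, phi. auto_derive. auto.
  rewrite <- Nat.sub_1_r, <- Nat.sub_succ_r. replace (S l - 1)%nat with l by lia.
  rewrite binom_S. unfold Rminus. ring.
Qed.

Lemma RInt_def_eq (f g : R -> R) x a v : x <= a ->
  (forall z, x <= z <= a -> f z = g z) -> is_RInt g x a v -> Defs.RInt f x a = v.
Proof.
  intros Hxa H Hg.
  assert (Hf : is_RInt f x a v).
  { apply is_RInt_ext with g; auto.
    intros z [H1 H2]. rewrite Rmin_left in H1 by lra. rewrite Rmax_right in H2 by lra.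
    symmetry; apply H; lra. }
  pose proof (ex_RInt_Reals_0 f x a (ex_intro _ v Hf)) as pr.
  unfold Defs.RInt.
  assert (Hex : exists v, exists pr : Riemann_integrable f x a, RiemannInt pr = v).
  { exists (RiemannInt pr). exists pr. reflexivity. }
  destruct (epsilon_spec (inhabits 0) _ Hex) as [pr' E].
  rewrite <- E. rewrite <- RInt_Reals. apply is_RInt_unique; auto.
Qed.

Lemma fnl_phi n k x z : 0 <= x <= z -> fnl n k z x = phi n k x z.
Proof.
  intros Hz. unfold fnl, phi, Fc, fc, FE, fE.
  destruct (Rle_dec x z); [|lra]. destruct (Rle_dec 0 z); [|lra]. destruct (Rle_dec 0 x); [|lra].
  assert (E1 : (1 - exp (- z) - (1 - exp (- x))) / (1 - (1 - exp (- x))) = 1 - exp (x - z)).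
  { replace (x - z) with (x + - z) by ring. rewrite exp_plus.
    replace (exp x) with (/ exp (- x)). field. apply Rgt_not_eq, exp_pos.
    rewrite exp_Ropp. apply Rinv_inv. }
  assert (E2 : exp (- z) / (1 - (1 - exp (- x))) = exp (x - z)).
  { replace (x - z) with (x + - z) by ring. rewrite exp_plus.
    replace (exp x) with (/ exp (- x)). field. apply Rgt_not_eq, exp_pos.
    rewrite exp_Ropp. apply Rinv_inv. }
  rewrite E1, E2. reflexivity.
Qed.

Lemma phi_cont n k x z : continuous (phi n k x) z.
Proof. apply (ex_derive_continuous (phi n k x)). unfold phi. auto_derive. auto. Qed.

Lemma diff_closed n l a x : 0 < x <= a -> Fnl n l a x - Fnl n (S l) a x = BB n l x a.
Proof.
  intros Hx.
  assert (Hex : forall k, ex_RInt (phi n k x) x a).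
  { intros k. apply (ex_RInt_continuous (V := R_CompleteNormedModule) (phi n k x)). intros; apply phi_cont. }
  assert (Hdiff : is_RInt (fun z => phi n l x z - phi n (S l) x z) x a (BB n l x a - BB n l x x)).
  { apply (is_RInt_derive (BB n l x) (fun z => phi n l x z - phi n (S l) x z)).
    intros; apply BB_deriv.
    intros z _. apply (continuous_minus (phi n l x) (phi n (S l) x)); apply phi_cont. }
  assert (HBx : exp (x - x) = 1) by (rewrite Rminus_diag; apply exp_0).
  destruct l as [|l'].
  - unfold Fnl at 1. destruct (Rle_dec x a); [|lra].
    unfold Fnl.
    rewrite (RInt_def_eq _ (phi n 1 x) x a (BB n 0 x x - BB n 0 x a)).
    + unfold BB. rewrite HBx. unfold binom. simpl. rewrite C_n_0. replace (1 - (1 - 1)) with 1 by ring. rewrite pow1. ring.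
    + lra.
    + intros z Hz. apply fnl_phi. lra.
    + apply is_RInt_ext with (f := fun z => opp (phi n 0 x z - phi n 1 x z)).
      intros z _. unfold phi at 1. simpl. unfold opp; simpl. ring.
      replace (BB n 0 x x - BB n 0 x a) with (opp (BB n 0 x a - BB n 0 x x)).
      apply (is_RInt_opp (V := R_NormedModule) (fun z => phi n 0 x z - phi n 1 x z)). apply Hdiff. unfold opp; simpl. ring.
  - unfold Fnl.
    rewrite (RInt_def_eq _ (phi n (S l') x) x a (RInt (phi n (S l') x) x a)).
    rewrite (RInt_def_eq _ (phi n (S (S l')) x) x a (RInt (phi n (S (S l')) x) x a)).
    + change (RInt (phi n (S l') x) x a - RInt (phi n (S (S l')) x) x a)
        with (minus (RInt (phi n (S l') x) x a) (RInt (phi n (S (S l')) x) x a)).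
      rewrite <- (RInt_minus (V := R_CompleteNormedModule) (phi n (S l') x) (phi n (S (S l')) x)) by auto.
      change (fun x0 : R => minus (phi n (S l') x x0) (phi n (S (S l')) x x0)) with (fun z : R => phi n (S l') x z - phi n (S (S l')) x z).
      rewrite (is_RInt_unique (V := R_CompleteNormedModule) _ _ _ _ Hdiff).
      unfold BB at 2. rewrite HBx. simpl. ring.
    + lra.
    + intros z Hz. apply fnl_phi. lra.
    + apply (RInt_correct (V := R_CompleteNormedModule)). auto.
    + lra.
    + intros z Hz. apply fnl_phi. lra.
    + apply (RInt_correct (V := R_CompleteNormedModule)). auto.
Qed.

Lemma exp_pow_INR s k : exp s ^ k = exp (INR k * s).
Proof.
  induction k.
  - simpl. rewrite Rmult_0_l, exp_0. reflexivity.
  - simpl pow. rewrite IHk, S_INR. replace ((INR k + 1) * s) with (INR k * s + s) by ring.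
    rewrite exp_plus. ring.
Qed.

Theorem mainTheorem8 (a : R) (k : nat) (ha : 0 < a) (hk : (1 <= k)%nat) :
  forall m l : nat, (m < k)%nat -> (l < k)%nat ->
  exists u : nat -> R,
    (forall n : nat,
       left_nth_deriv m (fun x => Fnl n l a x - Fnl n (S l) a x) a (u n)) /\
    Un_cv (fun n => u n / (INR n) ^ m) ((-1) ^ l * binom m l).
Proof.
  intros m l Hm Hl.
  exists (fun n => binom n l * Sd l m (INR (n - l))).
  split.
  - intro n. unfold left_nth_deriv. exists a. split; auto.
    exists (fun i x => binom n l * Di i l (INR (n - l)) (x - a)).
    split; [|split].
    + intros y Hy. rewrite diff_closed by lra. rewrite Di_closed. unfold BB.
      replace (1 - (1 - exp (y - a))) with (exp (y - a)) by ring.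
      rewrite exp_pow_INR. ring.
    + intros i _. split.
      * intros y _. apply D_deriv.
      * apply left_of_deriv, D_deriv.
    + simpl. rewrite Rminus_diag, Di0. reflexivity.
  - apply final_lim.
Qed.
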